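(* Let $n\ge 2$ and let ${\cal K}$ be a strongly connected closed simplicial complex of dimension $n$ of type $\{3,4\}$. Suppose there is an $(n-1)$-face $G$ of ${\cal K}$ such that every $(n-2)$-face $F\subset G$ lies in exactly $3$ $n$-faces. Then ${\cal K}$ is isomorphic to the boundary complex of the $(n+1)$-simplex (all proper nonempty subsets of an $(n+2)$-element set).
   Context: An (abstract) simplicial complex of dimension $n$ is a family of finite nonempty sets closed under taking nonempty subsets and under nonempty intersections, whose maximal members ($n$-faces) all have cardinality $n+1$. It is closed if every $(n-1)$-face lies in exactly two $n$-faces, and strongly connected if any two $n$-faces can be joined by a sequence of $n$-faces in which consecutive ones share an $(n-1)$-face. It is of type $\{3,4\}$ if every $(n-2)$-face lies in exactly $3$ or $4$ $n$-faces. *)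

(* Defs.v *)
From mathcomp Require Import all_boot all_order.
From mathcomp Require Import finmap.
From Stdlib Require Import Relations.Relation_Operators.
Set Implicit Arguments.
Unset Strict Implicit.
Unset Printing Implicit Defensive.
Open Scope fset_scope.

Section SC.
Variable T : choiceType.
Variable K : {fset T} -> Prop.

Definition simplicial_complex (n : nat) : Prop :=
  [/\ (forall S, K S -> S != fset0),
      (forall S S', K S -> S' `<=` S -> S' != fset0 -> K S'),
      (forall S S', K S -> K S' -> S `&` S' != fset0 -> K (S `&` S')),
      (forall S, K S -> #|` S| <= n.+1) &
      (forall S, K S -> (forall S', K S' -> S `<=` S' -> S' = S) ->
                 #|` S| = n.+1)].

Definition face (k : nat) (S : {fset T}) : Prop := K S /\ #|` S| = k.+1.

Definition in_exactly (n : nat) (F : {fset T}) (m : nat) : Prop :=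
  exists s : seq {fset T},
    [/\ uniq s, size s = m &
        forall S, S \in s <-> (face n S /\ F `<=` S)].

Definition closed_complex (n : nat) : Prop :=
  forall G, face n.-1 G -> in_exactly n G 2.

Definition adjacent (n : nat) (A B : {fset T}) : Prop :=
  face n A /\ face n B /\ face n.-1 (A `&` B).

Definition strongly_connected (n : nat) : Prop :=
  forall A B, face n A -> face n B -> clos_refl_trans _ (adjacent n) A B.

Definition type34 (n : nat) : Prop :=
  forall F, face (n - 2) F -> in_exactly n F 3 \/ in_exactly n F 4.

(* K is isomorphic to the boundary complex of the (n+1)-simplex on 'I_(n+2):
   a bijection f from the vertices of K onto 'I_(n+2) such that the faces of K
   are exactly the nonempty vertex sets whose image is a proper subset. *)
Definition iso_boundary_simplex (n : nat) : Prop :=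
  exists f : T -> 'I_n.+2,
    [/\ (forall v w, K [fset v] -> K [fset w] -> f v = f w -> v = w),
        (forall i, exists v, K [fset v] /\ f v = i) &
        (forall S, K S <->
           [/\ S != fset0, (forall v, v \in S -> K [fset v]) &
               #|` f @` S| < n.+2])].
End SC.

(* Main.v *)
Require Import Defs.
From mathcomp Require Import all_boot all_order.
From mathcomp Require Import finmap.
From mathcomp Require Import zify.
From Stdlib Require Import Relations.Relation_Operators Classical.
Open Scope fset_scope.

Section Proof.
Variable T : choiceType.
Variable K : {fset T} -> Prop.
Variable n : nat.
Hypothesis hn : 2 <= n.
Hypothesis SC : simplicial_complex K n.

Lemma eqcard (A B : {fset T}) : A `<=` B -> #|`B| <= #|`A| -> A = B.
Proof. by move=> h1 h2; apply/eqP; rewrite eqEfcard h1 h2. Qed.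

Lemma subK S S' : K S -> S' `<=` S -> S' != fset0 -> K S'.
Proof. by case: SC => _ h _ _ _; apply: h. Qed.

Lemma max_face S : K S -> exists M, face K n M /\ S `<=` M.
Proof.
have: forall k S, n.+1 - #|`S| <= k -> K S -> exists M, face K n M /\ S `<=` M.
  elim=> [|k IH] S0 hk KS0;
  (destruct (classic (forall S', K S' -> S0 `<=` S' -> S' = S0)) as [Hm|Hm];
   [exists S0; split => //; split => //; case: SC => _ _ _ _ h; exact: h|]);
  (apply not_all_ex_not in Hm; case: Hm => S' Hm;
   apply imply_to_and in Hm; case: Hm => KS' Hm;
   apply imply_to_and in Hm; case: Hm => sub neq);
  (have lt : #|`S0| < #|`S'|;
   [apply: fproper_ltn_card; rewrite fproperEneq sub andbT;
      apply/eqP => e; by apply: neq; rewrite e|]);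
  (have le : #|`S'| <= n.+1; [case: SC => _ _ _ h _; exact: h|]).
  - lia.
  - have [M [fM sM]] := IH S' ltac:(lia) KS'.
    exists M; split => //; exact: fsubset_trans sub sM.
move=> h KS; exact: (h _ S (leqnn _) KS).
Qed.

Lemma other (s : seq {fset T}) y : uniq s -> 2 <= size s -> exists2 z, z \in s & z != y.
Proof.
case: s => [|z1 [|z2 s]] //= u _.
case: (eqVneq z1 y) => [e|ne]; last by exists z1; rewrite ?inE ?eqxx.
exists z2; first by rewrite !inE eqxx orbT.
by subst; move: u; rewrite !inE negb_or => /andP [/andP [ne _] _]; rewrite eq_sym.
Qed.


Hypothesis CL : closed_complex K n.
Hypothesis SCo : strongly_connected K n.

Lemma no3 (s : seq {fset T}) X Y Z : size s <= 2 -> X \in s -> Y \in s -> Z \in s ->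
  X != Y -> X != Z -> Y != Z -> False.
Proof.
move=> hs hX hY hZ n1 n2 n3.
have u : uniq [:: X; Y; Z] by rewrite /= !inE negb_or n1 n2 n3.
have := uniq_leq_size u; rewrite /= => h.
have : 3 <= size s.
  apply: h => w; rewrite !inE => /orP [/eqP ->|/orP [/eqP ->|/eqP ->]] //.
by rewrite leqNgt; move: hs; case: (size s) => [|[|[|]]].
Qed.

Lemma no4 (s : seq {fset T}) A B D E : size s <= 3 -> A \in s -> B \in s -> D \in s -> E \in s ->
  A != B -> D != A -> D != B -> E != A -> E != B -> D = E.
Proof.
move=> hs hA hB hD hE n1 n2 n3 n4 n5.
apply/eqP; apply: contraT => n6.
have u : uniq [:: A; B; D; E].
  by rewrite /= !inE !negb_or n1 (eq_sym A D) n2 (eq_sym A E) n4 (eq_sym B D) n3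
     (eq_sym B E) n5 n6.
have := uniq_leq_size u; rewrite /= => h.
have : 4 <= size s.
  apply: h => w; rewrite !inE => /orP [/eqP ->|/orP [/eqP ->|/orP [/eqP ->|/eqP ->]]] //.
by rewrite leqNgt; move: hs; case: (size s) => [|[|[|[|]]]].
Qed.

Lemma main_lemma G : face K n.-1 G ->
  (forall F, face K (n - 2) F -> F `<=` G -> in_exactly K n F 3) ->
  iso_boundary_simplex K n.
Proof.
move=> [KG cG] H3.
have e1 : (n - 2).+2 = n.-1.+1 by lia.
have e2 : n.-1.+1 = n by lia.
have e3 : n.+1 = (n - 2).+3 by lia.
have cG' : #|`G| = n by rewrite cG e2.
have [s [us ss ms]] := CL G (conj KG cG).
case: s us ss ms => [|A [|B []]] // us _ ms.
have [[fA GA] [fB GB]] : (face K n A /\ G `<=` A) /\ (face K n B /\ G `<=` B).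
  by split; apply/ms; rewrite !inE eqxx ?orbT.
have nAB : A != B by move: us; rewrite /= inE andbT.
have ext : forall X, face K n X -> G `<=` X -> exists2 x, x \notin G & X = x |` G.
  move=> X [_ cX] GX.
  have : ~~ (X `<=` G).
    by apply/negP => /fsubset_leq_card; rewrite cX cG'; lia.
  case/fsubsetPn => x xX xG; exists x => //.
  apply/esym/eqcard; first by rewrite fsubUset fsub1set xX GX.
  by rewrite cardfsU1 xG cX cG'.
have [a aG eA] := ext A fA GA.
have [b bG eB] := ext B fB GB.
have nab : a != b by apply: contraNneq nAB => e; rewrite eA eB e.
have aB : a \notin B by rewrite eB !inE negb_or nab.
have bA : b \notin A by rewrite eA !inE negb_or eq_sym nab.
have KA : K A by case: fA.
have KB : K B by case: fB.
pose V := a |` (b |` G).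
have cV : #|`V| = n.+2.
  by rewrite /V cardfsU1 cardfsU1 !inE negb_or nab aG bG cG'.
have step1 : forall x, x \in G -> K (a |` (b |` (G `\ x))).
  move=> x xG; pose F := G `\ x.
  have cF : #|`F| = (n - 2).+1.
    by move: (cardfsD1 x G); rewrite xG cG' /F; lia.
  have FG : F `<=` G by apply: fsubD1set.
  have F0 : F != fset0 by rewrite -cardfs_gt0 cF.
  have KF : K F by apply: subK KG FG F0.
  have [s3 [us3 ss3 ms3]] := H3 F (conj KF cF) FG.
  have As3 : A \in s3 by apply/ms3; split => //; exact: fsubset_trans FG GA.
  have Bs3 : B \in s3 by apply/ms3; split => //; exact: fsubset_trans FG GB.
  have getD : forall c X, face K n X -> G `<=` X -> c \in X -> c \notin G ->
     exists2 D, D \in s3 & [/\ D != X, c \in D & F `<=` D].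
    move=> c X [KX cX] GX cX' cG0.
    have sub : c |` F `<=` X.
      by rewrite fsubUset fsub1set cX' /=; apply: fsubset_trans FG GX.
    have cF0 : c \notin F by apply: contra cG0; apply/fsubsetP.
    have cCF : #|`c |` F| = n.-1.+1 by rewrite cardfsU1 cF0 cF add1n e1.
    have KCF : K (c |` F) by apply: subK KX sub _; rewrite -cardfs_gt0 cCF.
    have [s2 [us2 ss2 ms2]] := CL _ (conj KCF cCF).
    have [D Ds2 DX] := other s2 X us2 (eq_leq (esym ss2)).
    have [fD sD] := (ms2 D).1 Ds2.
    exists D; last split => //.
    - apply/ms3; split => //; apply: fsubset_trans sD; exact: fsubsetU1.
    - by move/fsubsetP: sD; apply; rewrite fsetU11.
    - apply: fsubset_trans sD; exact: fsubsetU1.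
  have aA : a \in A by rewrite eA fsetU11.
  have bB : b \in B by rewrite eB fsetU11.
  have [D Ds3 [DA aD FD]] := getD a A fA GA aA aG.
  have [E Es3 [EB bE FE]] := getD b B fB GB bB bG.
  have DB : D != B by apply: contraTneq aD => ->.
  have EA : E != A by apply: contraTneq bE => ->.
  have eDE : D = E by exact: (@no4 s3 A B D E (eq_leq ss3) As3 Bs3 Ds3 Es3).
  have KD : K D by move: ((ms3 D).1 Ds3) => [[]].
  apply: subK KD _ _; last by apply/negP => /eqP e; have := fsetU11 a (b |` F); rewrite e inE.
  by rewrite fsubUset fsub1set aD fsubUset fsub1set eDE bE -eDE FD.
have step2 : forall S, S `<=` V -> S != V -> S != fset0 -> K S.
  move=> S SV nSV S0.
  have : ~~ (V `<=` S) by apply: contra nSV => VS; rewrite eqEfsubset SV VS.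
  case/fsubsetPn => y yV yS.
  have zy : forall z, z \in S -> z != y by move=> z zS; apply: contraNneq yS => <-.
  move: yV; rewrite /V !inE => /orP [/eqP ya|/orP [/eqP yb|yG]].
  - apply: subK KB _ S0; apply/fsubsetP => z zS.
    have := zy z zS; have := fsubsetP SV z zS.
    by rewrite eB /V !inE ya; case: (z == a); case: (z == b); case: (z \in G).
  - apply: subK KA _ S0; apply/fsubsetP => z zS.
    have := zy z zS; have := fsubsetP SV z zS.
    by rewrite eA /V !inE yb; case: (z == a); case: (z == b); case: (z \in G).
  - apply: subK (step1 y yG) _ S0; apply/fsubsetP => z zS.
    have := zy z zS; have := fsubsetP SV z zS.
    by rewrite /V !inE; case: (z == a); case: (z == b); case: (z \in G); case: (z == y).
have KV : forall S, K S -> S `<=` V -> S != V.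
  move=> S KS SV; apply/negP => /eqP e.
  have := (match SC with And5 _ _ _ h _ => h end) S KS.
  by rewrite e cV ltnn.
have adj : forall X Y, adjacent K n X Y -> X `<=` V -> Y `<=` V.
  move=> X Y [fX [fY fC]] XV; apply: contraT => /fsubsetPn [y yY yV].
  have yX : y \notin X by apply: contra yV; apply/fsubsetP.
  have [s2 [us2 ss2 ms2]] := CL _ fC.
  have Xs2 : X \in s2 by apply/ms2; split => //; exact: fsubsetIl.
  have Ys2 : Y \in s2 by apply/ms2; split => //; exact: fsubsetIr.
  case: fC => KC cC; case: (fX) => KX cX.
  have : ~~ (X `<=` X `&` Y).
    by apply/negP => /fsubset_leq_card; rewrite cC cX e2 ltnn.
  case/fsubsetPn => x' xX xC.
  have xV : x' \in V by apply: (fsubsetP XV).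
  pose Z := V `\ x'.
  have CZ : X `&` Y `<=` Z.
    apply/fsubsetP => w wC; rewrite in_fsetD1; apply/andP; split.
      by apply: contraTneq wC => ->.
    by apply: (fsubsetP XV); move: wC; rewrite in_fsetI => /andP [].
  have cZ : #|`Z| = n.+1 by move: (cardfsD1 x' V); rewrite xV cV add1n => [[]].
  have KZ : K Z.
    apply: step2; first exact: fsubD1set.
      by apply/negP => /eqP e; move: cZ; rewrite e cV => -[] h; move/eqP: h; rewrite eqn_leq ltnn.
    by rewrite -cardfs_gt0 cZ.
  have Zs2 : Z \in s2 by apply/ms2; split.
  exfalso; apply: (@no3 s2 X Y Z (eq_leq ss2) Xs2 Ys2 Zs2).
  - by apply: contraNneq yX => ->.
  - by apply: contraTneq xX => ->; rewrite fsetD11.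
  - by apply: contraNneq yV => e; move: yY; rewrite e => /fsetD1P [].
have step3 : forall X, face K n X -> X `<=` V.
  move=> X fX.
  have AV : A `<=` V by rewrite eA /V fsetUS // fsubsetU1.
  have H := SCo _ _ fA fX; move: H AV.
  elim => [x y h|x|x y z _ IH1 _ IH2] //.
  - by move=> xV; apply: adj h xV.
  - move=> xV; exact: IH2 (IH1 xV).
have step4 : forall S, K S -> S `<=` V.
  move=> S KS; have [M [fM SM]] := max_face S KS; exact: fsubset_trans SM (step3 M fM).
have memV : forall v, K [fset v] -> v \in V.
  by move=> v Kv; rewrite -fsub1set; apply: step4.
pose sV : seq T := enum_fset V.
have usV : uniq sV by apply: fset_uniq.
have szV : size sV = n.+2 by [].
pose f := fun v => (inord (index v sV) : 'I_n.+2).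
have fv : forall v, v \in V -> nat_of_ord (f v) = index v sV.
  move=> v vV; rewrite /f inordK //.
  by rewrite -szV index_mem.
have finj : {in V &, injective f}.
  move=> v w vV wV e; have := congr1 (@nat_of_ord _) e; rewrite !fv // => ei.
  have vV' : v \in sV by [].
  have wV' : w \in sV by [].
  by rewrite -(nth_index a vV') -(nth_index a wV') ei.
have SCs : forall S, K S -> S != fset0 /\ #|`S| <= n.+1.
  by move=> S KS; case: SC => h1 _ _ h4 _; split; [apply: h1|apply: h4].
exists f; split.
- move=> v w Kv Kw e; apply: finj => //; exact: memV.
- move=> i; exists (nth a sV i).
  have iV : nth a sV i \in sV by apply: mem_nth; rewrite szV.
  have iV' : nth a sV i \in V by [].
  split.
    apply: step2; first by rewrite fsub1set.
      by apply/negP => /eqP e; move: cV; rewrite -e cardfs1.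
    by rewrite -cardfs_gt0 cardfs1.
  by apply: val_inj; rewrite /= fv // index_uniq // szV.
- move=> S; split.
  + move=> KS; have [S0 cS] := SCs S KS; split => //.
      move=> v vS; apply: subK KS _ _; first by rewrite fsub1set.
      by rewrite -cardfs_gt0 cardfs1.
    have SV := step4 S KS.
    rewrite (eqP (introT (card_in_imfsetP _ _) _)) //.
    by move=> v w vS wS; apply: finj; apply: (fsubsetP SV).
  + move=> [S0 Hs hc].
    have SV : S `<=` V by apply/fsubsetP => v vS; apply: memV; apply: Hs.
    apply: step2 => //; apply/negP => /eqP e; move: hc.
    by rewrite e (eqP (introT (card_in_imfsetP _ _) finj)) cV ltnn.
Qed.

End Proof.

Theorem mainTheorem3 (T : choiceType) (K : {fset T} -> Prop) (n : nat) :
  2 <= n ->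
  simplicial_complex K n ->
  closed_complex K n ->
  strongly_connected K n ->
  type34 K n ->
  (exists G, face K n.-1 G /\
     (forall F, face K (n - 2) F -> F `<=` G -> in_exactly K n F 3)) ->
  iso_boundary_simplex K n.
Proof.
move=> hn SC CL SCo _ [G [fG H3]].
exact: (@main_lemma T K n hn SC CL SCo G fG H3).
Qed.
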